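(* Let $a,b\in\mathbb{Q}_3$ with $\gamma(a)=2$, $\gamma(b)=0$ and $(b_0,b_1)=(1,0)$ or $(2,2)$. Then $x=\sum_{k\ge0}x_k3^k\in\mathbb{Z}_3^*$ is a solution of $x^3+ax=b$ if and only if the congruences $$x_0^3\equiv b_0\pmod3,\qquad x_0^3\equiv b_0+3b_1\pmod 9,$$ $$x_0^2x_1+x_0a_0+M_1(x_0)\equiv b_2\pmod3,$$ $$x_0^2x_2+P_3^2(x_0,x_1)+x_1a_0+x_0a_1+x_0x_1^2+M_2(x_0,x_1)\equiv b_3\pmod3,$$ $$x_0^2x_{k-1}+P_k^{k-1}(x_0,\dots,x_{k-2})+2x_0x_1x_{k-2}+x_{k-2}a_0+x_{k-3}a_1+\dots+x_0a_{k-2}+M_{k-1}(x_0,\dots,x_{k-2})\equiv b_k\pmod3,\quad k\ge4,$$ are fulfilled, where the integers $M_k(x_0,\dots,x_{k-1})$ are defined by $$x_0^3=b_0+3b_1+9M_1(x_0),$$ $$x_0^2x_1+x_0a_0=b_2-M_1(x_0)+3M_2(x_0,x_1),$$ $$x_0^2x_2+P_3^2(x_0,x_1)+x_1a_0+x_0a_1+x_0x_1^2=b_3-M_2(x_0,x_1)+3M_3(x_0,x_1,x_2),$$ $$x_0^2x_{k-1}+P_k^{k-1}(x_0,\dots,x_{k-2})+2x_0x_1x_{k-2}+x_{k-2}a_0+\dots+x_0a_{k-2}=b_k-M_{k-1}(x_0,\dots,x_{k-2})+3M_k(x_0,\dots,x_{k-1}),\quad k\ge4.$$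
   Context: Write $a=3^{\gamma(a)}(a_0+a_13+a_23^2+\dots)$, $b=3^{\gamma(b)}(b_0+b_13+b_23^2+\dots)$ in canonical form, with digits $a_j,b_j\in\{0,1,2\}$, $a_0,b_0\ne0$, $\gamma(a),\gamma(b)\in\mathbb{Z}$. $\mathbb{Z}_3^*$ is the set of $3$-adic units; $x\in\mathbb{Z}_3^*$ is written $x=x_0+x_13+x_23^2+\dots$ with $x_j\in\{0,1,2\}$, $x_0\ne0$. For $j\le k$, $$P_k^j(x_0,\dots,x_{j-1})=\sum\frac{6}{m_0!m_1!\cdots m_{j-1}!}x_0^{m_0}x_1^{m_1}\cdots x_{j-1}^{m_{j-1}},$$ the sum over nonnegative integers $m_0,\dots,m_{j-1}$ with $\sum_{i=0}^{j-1}m_i=3$ and $\sum_{i=1}^{j-1}im_i=k$. *)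

(* Defs.v *)
(* 3-adic integers are represented by their digit sequences. *)
From HB Require Import structures.
From mathcomp Require Import all_boot all_order all_algebra.
From mathcomp Require Import intdiv.
Set Implicit Arguments. Unset Strict Implicit. Unset Printing Implicit Defensive.
Import Order.TTheory GRing.Theory Num.Theory.
Local Open Scope ring_scope.

Definition is_digits (d : nat -> nat) : Prop := forall i, (d i < 3)%N.

Definition dg (d : nat -> nat) (i : nat) : int := (d i)%:Z.

Definition trunc (d : nat -> nat) (n : nat) : int :=
  \sum_(i < n) dg d i * 3 ^+ i.

(* For a = 3^2 (a_0 + a_1 3 + ...), b = b_0 + b_1 3 + ..., x = x_0 + x_1 3 + ...
   the equation x^3 + a x = b holds in Q_3 (all three lie in Z_3) iff it holds
   modulo 3^n for every n, i.e. for all truncations. *)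
Definition cubic_solution (a b x : nat -> nat) : Prop :=
  forall n : nat,
    (3 ^+ n %| trunc x n ^+ 3 + 3 ^+ 2 * trunc a n * trunc x n - trunc b n)%Z.

(* P_k^j(x_0,...,x_{j-1}) = sum over (m_0,...,m_{j-1}) with sum m_i = 3 and
   sum i m_i = k of 6/(m_0! ... m_{j-1}!) x_0^{m_0} ... x_{j-1}^{m_{j-1}}.
   (Each m_i <= 3, so m ranges over {ffun 'I_j -> 'I_4}.) *)
Definition P (k j : nat) (x : nat -> int) : int :=
  \sum_(m : {ffun 'I_j -> 'I_4} |
          ((\sum_(i < j) (m i : nat) == 3) && (\sum_(i < j) i * m i == k))%N)
     ((6 %/ \prod_(i < j) (m i : nat)`!)%N)%:Z * \prod_(i < j) x i ^+ (m i : nat).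

Definition L (a b x : nat -> nat) (k : nat) : int :=
  let X := dg x in let A := dg a in
  match k with
  | 2 => X 0 ^+ 2 * X 1 + X 0 * A 0
  | 3 => X 0 ^+ 2 * X 2 + P 3 2 X + X 1 * A 0 + X 0 * A 1 + X 0 * X 1 ^+ 2
  | _ => X 0 ^+ 2 * X k.-1 + P k k.-1 X + 2 * X 0 * X 1 * X (k - 2)%N%N
         + \sum_(i < k.-1) X (k - 2 - i)%N * A i
  end.

(* the integers M_k:
   x_0^3 = b_0 + 3 b_1 + 9 M_1,  L_k = b_k - M_{k-1} + 3 M_k  (k >= 2).
   (Exact division whenever the preceding congruences hold.) *)
Fixpoint M (a b x : nat -> nat) (k : nat) : int :=
  match k with
  | 0 => 0
  | 1 => ((dg x 0 ^+ 3 - dg b 0 - 3 * dg b 1) %/ 9)%Z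
  | k'.+1 => ((L a b x k + M a b x k' - dg b k) %/ 3)%Z
  end.

Definition congruences (a b x : nat -> nat) : Prop :=
  [/\ (dg x 0 ^+ 3 = dg b 0 %[mod 3])%Z,
      (dg x 0 ^+ 3 = dg b 0 + 3 * dg b 1 %[mod 9])%Z &
      forall k : nat, (2 <= k)%N ->
        (L a b x k + M a b x k.-1 = dg b k %[mod 3])%Z].

(* Main.v *)
Require Import Defs.
From mathcomp Require Import all_boot all_order all_algebra.
From mathcomp Require Import zify ring.
Set Implicit Arguments. Unset Strict Implicit. Unset Printing Implicit Defensive.
Import Order.TTheory GRing.Theory Num.Theory.
Local Open Scope ring_scope.

Definition Pg (s k j : nat) (X : nat -> int) : int :=
  \sum_(m : {ffun 'I_j -> 'I_4} |
          ((\sum_(i < j) (m i : nat) == s) && (\sum_(i < j) i * m i == k))%N)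
     ((s`! %/ \prod_(i < j) (m i : nat)`!)%N)%:Z * \prod_(i < j) X i ^+ (m i : nat).

Lemma P_Pg k j X : P k j X = Pg 3 k j X. Proof. by []. Qed.

Definition ext j (t : 'I_4) (m : {ffun 'I_j -> 'I_4}) : {ffun 'I_j.+1 -> 'I_4} :=
  [ffun i => if unlift ord_max i is Some i' then m i' else t].
Definition res j (m : {ffun 'I_j.+1 -> 'I_4}) : 'I_4 * {ffun 'I_j -> 'I_4} :=
  (m ord_max, [ffun i => m (lift ord_max i)]).

Lemma ext_bij j : bijective (fun p : 'I_4 * {ffun 'I_j -> 'I_4} => ext p.1 p.2).
Proof.
exists (@res j).
- case=> t m; rewrite /res /ext /= !ffunE unlift_none; congr pair.
  by apply/ffunP=> i; rewrite !ffunE liftK.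
- move=> m; apply/ffunP=> i; rewrite /ext /res ffunE /=.
  by case: unliftP => [i' ->|->]; rewrite ?ffunE.
Qed.

Lemma ext_widen j t (m : {ffun 'I_j -> 'I_4}) i :
  ext t m (widen_ord (leqnSn j) i) = m i.
Proof.
have -> : widen_ord (leqnSn j) i = lift ord_max i by apply: val_inj => /=; rewrite /bump leqNgt ltn_ord.
by rewrite /ext ffunE liftK.
Qed.

Lemma ext_max j t (m : {ffun 'I_j -> 'I_4}) : ext t m ord_max = t.
Proof. by rewrite /ext ffunE unlift_none. Qed.

Lemma sum_ext j (F : {ffun 'I_j.+1 -> 'I_4} -> int) :
  \sum_m F m = \sum_(t : 'I_4) \sum_(m : {ffun 'I_j -> 'I_4}) F (ext t m).
Proof.
rewrite pair_bigA /=.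
exact: (reindex (fun p : 'I_4 * {ffun 'I_j -> 'I_4} => ext p.1 p.2) (onW_bij _ (ext_bij j))).
Qed.

Lemma fact_dvd j (F : 'I_j -> nat) :
  (\prod_(i < j) (F i)`! %| (\sum_(i < j) F i)`!)%N.
Proof.
elim: j F => [|j IH] F; first by rewrite !big_ord0.
rewrite !big_ord_recr /=.
set S := \sum_(i < j) _; set f := F ord_max.
rewrite -(@bin_fact (S + f) f) ?leq_addl // addnK.
rewrite mulnCA mulnC dvdn_mul //; last exact: dvdn_mull.
Qed.

Lemma weight_split s t Q : (t <= s)%N -> (Q %| (s - t)`!)%N ->
  (s`! %/ (Q * t`!) = 'C(s, t) * ((s - t)`! %/ Q))%N.
Proof.
move=> ts /dvdnP [r er].
have Qp : (0 < Q)%N.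
  case: Q er => // er; have := fact_gt0 (s - t); by rewrite er muln0.
rewrite er mulnK //.
rewrite -(bin_fact ts) er.
have -> : ('C(s, t) * (t`! * (r * Q)) = ('C(s, t) * r) * (Q * t`!))%N by ring.
by rewrite mulnK // muln_gt0 Qp fact_gt0.
Qed.

Lemma addn_eq_sub (x t s : nat) : (t <= s)%N -> ((x + t)%N == s) = (x == (s - t)%N).
Proof. by move=> h; apply/eqP/eqP; lia. Qed.

Lemma Pg_rec s k j X : (s <= 3)%N ->
  Pg s k j.+1 X = \sum_(t < 4 | (t <= s)%N)
     ('C(s, t))%:Z * X j ^+ t * (if (j * t <= k)%N then Pg (s - t) (k - j * t) j X else 0).
Proof.
move=> s3; rewrite /Pg big_mkcond sum_ext /= [RHS]big_mkcond /=.
apply: eq_bigr => t _.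
under eq_bigr => m _ do rewrite !big_ord_recr /= !ext_max.
under eq_bigr => m _ do under [\sum_(i < j) _]eq_bigr => i _ do rewrite ext_widen.
under eq_bigr => m _ do under [\sum_(i < j) (i * _)%N]eq_bigr => i _ do rewrite ext_widen.
under eq_bigr => m _ do under [\prod_(i < j) _]eq_bigr => i _ do rewrite ext_widen.
under eq_bigr => m _ do under [\prod_(i < j) (_ ^+ _)]eq_bigr => i _ do rewrite ext_widen.
case: (leqP (t : nat) s) => ts; last first.
  by apply: big1 => m _; rewrite ifF //; apply/negbTE; apply/nandP; left; apply/eqP; lia.
case: (leqP (j * t) k) => jk; last first.
  by rewrite mulr0; apply: big1 => m _; rewrite ifF //; apply/negbTE; apply/nandP; right; apply/eqP; lia.
rewrite mulr_sumr [RHS]big_mkcond; apply: eq_bigr => m _.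
rewrite addn_eq_sub // addn_eq_sub //.
case: ifP => [/andP [/eqP e1 e2]|nc]; last by rewrite ?ifF.
rewrite weight_split //; last by rewrite -e1 (fact_dvd (fun i => (m i : nat))).
rewrite PoszM; ring.
Qed.

Definition px (X : nat -> int) n : {poly int} := \poly_(i < n) X i.

Lemma Pg0 s k X : Pg s k 0 X = if (s == 0%N) && (k == 0%N) then 1 else 0.
Proof.
rewrite /Pg big_mkcond (big_pred1 [ffun i => ord0]); last first.
  by move=> m; rewrite /= eq_sym; apply/esym/eqP/ffunP => -[i hi].
rewrite !big_ord0 divn1 eq_sym [(0%N == k)]eq_sym.
by case: s => [|s] //=; rewrite mulr1.
Qed.

Lemma px_rec X j : px X j.+1 = px X j + X j *: 'X^j.
Proof. by rewrite /px !poly_def big_ord_recr. Qed.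

Lemma Pg_poly s k j X : (s <= 3)%N -> Pg s k j X = ((px X j) ^+ s)`_k.
Proof.
elim: j s k => [|j IH] s k s3.
  rewrite Pg0 /px poly_def big_ord0.
  case: s s3 => [|s] _; first by rewrite expr0 coef1 /=; case: k.
  by rewrite exprS mul0r coef0 andFb.
rewrite Pg_rec // px_rec exprDn coef_sum.
rewrite (big_ord_widen 4 (fun i => ((px X j ^+ (s - i) * (X j *: 'X^j) ^+ i) *+ 'C(s, i))`_k)) //.
apply: eq_bigr => t ts.
rewrite IH; last lia.
rewrite coefMn exprZn -exprM -scalerAr coefZ coefMXn ltnNge.
case: (j * t <= k)%N; last by rewrite !mulr0 mul0rn.
by rewrite -mulr_natl natz mulrA.
Qed.

Lemma P_poly k j X : P k j X = ((px X j) ^+ 3)`_k.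
Proof. by rewrite P_Pg Pg_poly. Qed.

Lemma trunc_px d n : trunc d n = (px (dg d) n).[3].
Proof. by rewrite /px horner_poly. Qed.

Lemma px_ext Y n d : exists R, px Y (n + d) = px Y n + 'X^n * R.
Proof.
elim: d => [|d [R IH]]; first by exists 0; rewrite addn0 mulr0 addr0.
exists (R + (Y (n + d))%:P * 'X^d); rewrite addnS px_rec IH exprD -mul_polyC; ring.
Qed.

Lemma px0 Y : px Y 0 = 0. Proof. by rewrite /px poly_def big_ord0. Qed.
Lemma px1 Y : px Y 1 = (Y 0%N)%:P.
Proof. by rewrite px_rec px0 add0r expr0 -mul_polyC mulr1. Qed.
Lemma px2 Y : px Y 2 = (Y 0%N)%:P + (Y 1%N)%:P * 'X.
Proof. by rewrite px_rec px1 expr1 -mul_polyC. Qed.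
Lemma px3 Y : px Y 3 = (Y 0%N)%:P + (Y 1%N)%:P * 'X + (Y 2%N)%:P * 'X^2.
Proof. by rewrite px_rec px2 -mul_polyC. Qed.

Lemma coef3 (c0 c1 : int) R i : (c0%:P + c1%:P * 'X + 'X^2 * R)`_i =
  if i == 0%N then c0 else if i == 1%N then c1 else R`_(i - 2).
Proof.
rewrite !coefD coefC coefCM coefX coefXnM.
by case: i => [|[|i]] /=; rewrite ?mulr0 ?mulr1 ?add0r ?addr0.
Qed.

Section Main.
Variables (a b x : nat -> nat).
Local Notation X := (dg x).
Local Notation A := (dg a).
Local Notation B := (dg b).

Definition Qp n : {poly int} := px X n ^+ 3 + 'X^2 * (px A n * px X n).
Definition cc k := (Qp k.+1)`_k.

Lemma Qp_stab n m k : (n <= m)%N -> (k < n)%N -> (Qp m)`_k = (Qp n)`_k.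
Proof.
move=> nm kn; rewrite -(subnKC nm).
have [R eR] := px_ext X n (m - n); have [S eS] := px_ext A n (m - n).
rewrite /Qp eR eS.
set p := px X n; set q := px A n; set z := 'X^n.
have -> : (p + z * R) ^+ 3 + 'X^2 * ((q + z * S) * (p + z * R)) =
   (p ^+ 3 + 'X^2 * (q * p)) + z * (3 * p ^+ 2 * R + 3 * p * z * R ^+ 2
     + z ^+ 2 * R ^+ 3 + 'X^2 * (q * R + S * p + z * S * R)) by ring.
by rewrite coefD coefXnM kn addr0.
Qed.

Lemma cc_stab n k : (k < n)%N -> (Qp n)`_k = cc k.
Proof. by move=> kn; rewrite /cc (@Qp_stab k.+1 n). Qed.

Definition Sc n := \sum_(k < n) cc k * 3 ^+ k.

Lemma Sc_mod n : (3 ^+ n %| (Qp n).[3] - Sc n)%Z.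
Proof.
rewrite -{1}(poly_take_drop n (Qp n)) hornerD hornerM hornerXn.
have -> : take_poly n (Qp n) = \poly_(i < n) (Qp n)`_i.
  by apply/polyP => i; rewrite coef_take_poly.
rewrite horner_poly /Sc (eq_bigr (fun k : 'I_n => cc k * 3 ^+ k)); last first.
  by move=> i _; rewrite cc_stab.
by rewrite addrAC subrr add0r dvdz_mull.
Qed.

Lemma eval_Qp n : trunc x n ^+ 3 + 3 ^+ 2 * trunc a n * trunc x n = (Qp n).[3].
Proof. by rewrite /Qp !trunc_px !hornerE. Qed.

Lemma sol_iff n : (3 ^+ n %| trunc x n ^+ 3 + 3 ^+ 2 * trunc a n * trunc x n - trunc b n)%Z
  <-> (3 ^+ n %| Sc n - trunc b n)%Z.
Proof.
rewrite eval_Qp; have h := Sc_mod n; split => H.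
  have -> : Sc n - trunc b n = ((Qp n).[3] - trunc b n) - ((Qp n).[3] - Sc n) by ring.
  by rewrite rpredB.
have -> : (Qp n).[3] - trunc b n = ((Qp n).[3] - Sc n) + (Sc n - trunc b n) by ring.
by rewrite rpredD.
Qed.


Lemma cc0 : cc 0 = X 0%N ^+ 3.
Proof.
rewrite /cc /Qp !px1.
have -> : (X 0%N)%:P ^+ 3 + 'X^2 * ((A 0%N)%:P * (X 0%N)%:P) =
   (X 0%N ^+ 3)%:P + 0%:P * 'X + 'X^2 * (A 0%N * X 0%N)%:P by ring.
by rewrite coef3.
Qed.

Definition r k : int := match k with
  | 0 => 0
  | 1 => X 0%N ^+ 2 * X 1%N
  | 2 => X 0%N ^+ 2 * X 2%N + X 0%N * X 1%N ^+ 2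
  | k'.+1 => X 0%N ^+ 2 * X k + 2 * X 0%N * X 1%N * X k'
  end.

Lemma cc1 : cc 1 = 3 * r 1.
Proof.
rewrite /cc /Qp (px2 X).
have -> : ((X 0%N)%:P + (X 1%N)%:P * 'X) ^+ 3 + 'X^2 * (px A 2 * ((X 0%N)%:P + (X 1%N)%:P * 'X)) =
   (X 0%N ^+ 3)%:P + (3 * (X 0%N ^+ 2 * X 1%N))%:P * 'X + 'X^2 *
     ((3 * X 0%N * X 1%N ^+ 2)%:P + (X 1%N ^+ 3)%:P * 'X + px A 2 * ((X 0%N)%:P + (X 1%N)%:P * 'X)) by ring.
by rewrite coef3.
Qed.

Lemma cube2 : (px X 3 ^+ 3)`_2 = 3 * X 0%N ^+ 2 * X 2%N + 3 * X 0%N * X 1%N ^+ 2.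
Proof.
rewrite px3.
set x0 := X 0%N; set x1 := X 1%N; set x2 := X 2%N.
have -> : (x0%:P + x1%:P * 'X + x2%:P * 'X^2) ^+ 3 =
  (x0 ^+ 3)%:P + 'X^1 * ((3 * x0 ^+ 2 * x1)%:P + (3 * x0 ^+ 2 * x2 + 3 * x0 * x1 ^+ 2)%:P * 'X
   + 'X^2 * ((6 * x0 * x1 * x2 + x1 ^+ 3)%:P + (3 * x0 * x2 ^+ 2 + 3 * x1 ^+ 2 * x2)%:P * 'X
   + (3 * x1 * x2 ^+ 2)%:P * 'X^2 + (x2 ^+ 3)%:P * 'X^3)) by ring.
by rewrite coefD coefC coefXnM /= coef3.
Qed.

Lemma cubek j : (px X j.+4 ^+ 3)`_j.+3 =
  (px X j.+2 ^+ 3)`_j.+3 + 3 * X 0%N ^+ 2 * X j.+3 + 6 * X 0%N * X 1%N * X j.+2.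
Proof.
have [R eR] := px_ext X 2 j.
rewrite (px_rec X j.+3) (px_rec X j.+2).
set p := px X j.+2.
have ep : p = (X 0%N)%:P + (X 1%N)%:P * 'X + 'X^2 * R by rewrite /p -px2; exact: eR.
rewrite -!mul_polyC.
have ez2 : ('X^(j.+2) : {poly int}) = 'X^2 * 'X^j by rewrite -exprD.
have ez3 : ('X^(j.+3) : {poly int}) = 'X^2 * 'X^j * 'X by rewrite -exprD -exprSr.
rewrite ez3 ez2.
set u := ('X^j : {poly int}); set al := X j.+2; set be := X j.+3.
set x0 := X 0%N; set x1 := X 1%N.
have id : forall p', p' = x0%:P + x1%:P * 'X + 'X^2 * R ->
  (p' + al%:P * ('X^2 * u) + be%:P * ('X^2 * u * 'X)) ^+ 3 =
  p' ^+ 3 + ('X^2 * u) * ((3 * x0 ^+ 2 * al)%:P + (3 * x0 ^+ 2 * be + 6 * x0 * x1 * al)%:P * 'X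
    + 'X^2 * (3 * ((2 * x0 * x1 * be)%:P + (x1 ^+ 2 * al)%:P + (x1 ^+ 2 * be)%:P * 'X
        + (2 * (x0%:P + x1%:P * 'X) * R + 'X^2 * R ^+ 2) * (al%:P + be%:P * 'X))
      + u * (3 * p' * (al%:P + be%:P * 'X) ^+ 2 + 'X^2 * u * (al%:P + be%:P * 'X) ^+ 3))).
  by move=> p' ->; ring.
rewrite (id p ep) coefD -ez2 coefXnM.
have h : (j.+3 < j.+2)%N = false by rewrite ltnNge leqnSn.
rewrite h !subSS subSnn coef3 /=.
ring.
Qed.

Lemma apart j : (px A j.+3 * px X j.+3)`_j = \sum_(i < j.+1) X (j - i)%N * A i.
Proof.
rewrite coefM; apply: eq_bigr => i _.
have hi := ltn_ord i.
have h1 : (i < j.+3)%N by lia.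
have h2 : (j - i < j.+3)%N by lia.
by rewrite !coef_poly h1 h2 mulrC.
Qed.

Lemma cc_split j : cc j.+2 = (px X j.+3 ^+ 3)`_j.+2 + (px A j.+3 * px X j.+3)`_j.
Proof. by rewrite /cc /Qp coefD coefXnM /= !subSS subn0. Qed.

Lemma cc_rel k : (2 <= k)%N -> cc k = L a b x k - r k.-1 + 3 * r k.
Proof.
case: k => [|[|[|[|j]]]] // _.
- rewrite cc_split cube2 apart big_ord1 /L /=; ring.
- rewrite cc_split cubek apart !big_ord_recr big_ord0 /L /= P_poly; ring.
- rewrite cc_split cubek apart /L /= P_poly.
  rewrite (_ : (j.+4 - 2 = j.+2)%N); last by rewrite !subSS subn0.
  ring.
Qed.


Lemma cc_relS k : cc k.+2 = L a b x k.+2 - r k.+1 + 3 * r k.+2.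
Proof. exact: cc_rel. Qed.

Lemma Sc_rec n : Sc n.+1 = Sc n + cc n * 3 ^+ n.
Proof. by rewrite /Sc big_ord_recr. Qed.

Lemma Tb_rec n : trunc b n.+1 = trunc b n + B n * 3 ^+ n.
Proof. by rewrite /trunc big_ord_recr. Qed.

Lemma M_S k : M a b x k.+2 = ((L a b x k.+2 + M a b x k.+1 - B k.+2) %/ 3)%Z.
Proof. by []. Qed.

Lemma Sc2 : Sc 2 = X 0%N ^+ 3 + 9 * r 1.
Proof. rewrite !Sc_rec /Sc big_ord0 cc0 cc1 /=; ring. Qed.

Lemma Tb2 : trunc b 2 = B 0%N + 3 * B 1%N.
Proof. rewrite !Tb_rec /trunc big_ord0 /=; ring. Qed.

Lemma Sc_formula n :
  (9 %| X 0%N ^+ 3 - B 0%N - 3 * B 1%N)%Z ->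
  (forall k, (2 <= k < n.+2)%N -> (3 %| L a b x k + M a b x k.-1 - B k)%Z) ->
  Sc n.+2 = trunc b n.+2 + 3 ^+ n.+2 * (M a b x n.+1 + r n.+1).
Proof.
elim: n => [|n IH] H1 Hk.
  rewrite Sc2 Tb2.
  have e : M a b x 1 * 9 = X 0%N ^+ 3 - B 0%N - 3 * B 1%N by rewrite /= divzK.
  have e' : X 0%N ^+ 3 = M a b x 1 * 9 + B 0%N + 3 * B 1%N by rewrite e; ring.
  rewrite e'; ring.
rewrite Sc_rec IH //; last by move=> k /andP [k2 kn]; apply: Hk; rewrite k2 ltnW.
rewrite cc_relS (Tb_rec n.+2).
have h : (3 %| L a b x n.+2 + M a b x n.+1 - B n.+2)%Z by apply: Hk; rewrite /= ltnSn.
have e : M a b x n.+2 * 3 = L a b x n.+2 + M a b x n.+1 - B n.+2 by rewrite M_S divzK.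
have eL : L a b x n.+2 = M a b x n.+2 * 3 - M a b x n.+1 + B n.+2 by rewrite e; ring.
rewrite eL (exprS _ n.+2). set t := 3 ^+ n.+2. ring.
Qed.

Lemma modP d u v : (u = v %[mod d])%Z <-> (d %| u - v)%Z.
Proof. by rewrite -eqz_mod_dvd; split => [->|/eqP]. Qed.

Lemma main_iff : cubic_solution a b x <-> congruences a b x.
Proof.
rewrite /cubic_solution /congruences.
have SI := sol_iff.
split.
- move=> H.
  have h1 : (3 %| X 0%N ^+ 3 - B 0%N)%Z.
    have := (SI 1%N).1 (H 1%N); rewrite Sc_rec /Sc big_ord0 cc0 /trunc big_ord1 /=.
    by rewrite !expr1 !mulr1 add0r.
  have h2 : (9 %| X 0%N ^+ 3 - B 0%N - 3 * B 1%N)%Z.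
    have := (SI 2%N).1 (H 2%N); rewrite Sc2 Tb2.
    have -> : X 0%N ^+ 3 + 9 * r 1 - (B 0%N + 3 * B 1%N) = 9 * r 1 + (X 0%N ^+ 3 - B 0%N - 3 * B 1%N) by ring.
    by rewrite rpredDl // dvdz_mulr.
  have hk : forall n k, (2 <= k < n.+2)%N -> (3 %| L a b x k + M a b x k.-1 - B k)%Z.
    elim=> [|n IH] k /andP [k2 kn].
      by have : (k < 2)%N by []; rewrite ltnNge k2.
    have [kn'|] := ltnP k n.+2; first by apply: IH; rewrite k2.
    move=> nk; have ek : k = n.+2 by apply/eqP; rewrite eqn_leq nk -ltnS kn.
    rewrite ek.
    have F := Sc_formula h2 IH.
    have := (SI n.+3).1 (H n.+3).
    rewrite Sc_rec F cc_relS (Tb_rec n.+2).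
    have -> : trunc b n.+2 + 3 ^+ n.+2 * (M a b x n.+1 + r n.+1) +
      (L a b x n.+2 - r n.+1 + 3 * r n.+2) * 3 ^+ n.+2 - (trunc b n.+2 + B n.+2 * 3 ^+ n.+2)
      = 3 ^+ n.+2 * ((L a b x n.+2 + M a b x n.+1 - B n.+2) + 3 * r n.+2) by ring.
    have e3 : (3 : int) ^+ n.+3 = 3 ^+ n.+2 * 3 by rewrite exprSr.
    rewrite e3 dvdz_mul2l ?expf_neq0 // rpredDr //; exact: dvdz_mulr.
  split.
  + by apply/(modP 3).
  + by apply/(modP 9); rewrite opprD addrA.
  + move=> k k2; apply/(modP 3); apply: (hk k); rewrite k2 /=; lia.
- case=> /(modP 3) h1 /(modP 9) h2 hk n.
  rewrite opprD addrA in h2.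
  apply/(SI n).
  case: n => [|[|n]].
  + by rewrite expr0 dvd1z.
  + by rewrite Sc_rec /Sc big_ord0 cc0 /trunc big_ord1 /= !expr1 !mulr1 add0r.
  + rewrite Sc_formula //.
    * by rewrite addrAC subrr add0r dvdz_mulr.
    * by move=> k /andP [k2 _]; apply/(modP 3)/hk.
Qed.

End Main.

Theorem theorem3p4 (a b x : nat -> nat) :
  is_digits a -> (a 0 != 0)%N ->
  is_digits b -> (b 0 != 0)%N ->
  ((b 0%N, b 1%N) = (1, 0)%N \/ (b 0%N, b 1%N) = (2, 2)%N) ->
  is_digits x -> (x 0 != 0)%N ->
  (cubic_solution a b x <-> congruences a b x).
Proof. by move=> *; apply: main_iff. Qed.
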